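(* Let $m \ge n$, let $A$ be an $m \times n$ matrix with integer coefficients of full rank $n$, and let $b \in \mathbb{Z}^m$. Set $H = \max_{i,j}\left(|A_{ij}|, |b_i|\right)$. If $b$ is not orthogonal to the image of $A$, then \[ \kappa_{LS}(A,b) \le 3\, n^{\frac{n}{2}+1} m^{n+\frac{1}{2}} H^{2n+1}. \]
   Context: Norms are Euclidean $2$-norms. Let $x \in \mathbb{R}^n$ be the minimizer of $\|Ax-b\|^2$ (least squares solution), $r = Ax - b$ the residual, and $\theta \in [0,\pi/2]$ defined by $\sin\theta = \|r\|/\|b\|$. Let $\sigma_{\max}(A)$ and $\sigma_{\min}(A)$ be the largest and smallest singular values of $A$ and $\kappa(A) = \sigma_{\max}(A)/\sigma_{\min}(A)$. The condition number of the least squares problem is \[ \kappa_{LS}(A,b) = \frac{2\kappa(A)}{\cos\theta} + \tan\theta\,\kappa(A)^2 . \] *)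

(* Defs.v *)
From mathcomp Require Import all_boot all_order all_algebra.
From mathcomp Require Import all_classical all_reals all_analysis.
Set Implicit Arguments. Unset Strict Implicit. Unset Printing Implicit Defensive.
Import Order.TTheory GRing.Theory Num.Theory.
Local Open Scope ring_scope.
Local Open Scope classical_set_scope.

Definition norm2 {R : realType} {m : nat} (v : 'cV[R]_m) : R :=
  Num.sqrt (\sum_(i < m) (v i 0) ^+ 2).

Definition is_LS_solution {R : realType} {m n : nat}
  (A : 'M[R]_(m, n)) (b : 'cV[R]_m) (x : 'cV[R]_n) : Prop :=
  forall y : 'cV[R]_n, norm2 (A *m x - b) ^+ 2 <= norm2 (A *m y - b) ^+ 2.

Definition singular_values {R : realType} {m n : nat} (A : 'M[R]_(m, n)) : set R :=
  [set Num.sqrt a | a in [set a : R | eigenvalue (A^T *m A) a]].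

Definition sigma_max {R : realType} {m n : nat} (A : 'M[R]_(m, n)) : R :=
  sup (singular_values A).
Definition sigma_min {R : realType} {m n : nat} (A : 'M[R]_(m, n)) : R :=
  inf (singular_values A).
Definition kappa {R : realType} {m n : nat} (A : 'M[R]_(m, n)) : R :=
  sigma_max A / sigma_min A.

Definition LS_theta {R : realType} {m n : nat}
  (A : 'M[R]_(m, n)) (b : 'cV[R]_m) (x : 'cV[R]_n) : R :=
  asin (norm2 (A *m x - b) / norm2 b).

Definition kappa_LS {R : realType} {m n : nat}
  (A : 'M[R]_(m, n)) (b : 'cV[R]_m) (x : 'cV[R]_n) : R :=
  let th := LS_theta A b x in
  2 * kappa A / cos th + tan th * kappa A ^+ 2.

Definition height {m n : nat} (A : 'M[int]_(m, n)) (b : 'cV[int]_m) : int :=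
  Num.max (\big[Num.max/0]_(i < m) \big[Num.max/0]_(j < n) `|A i j|)
          (\big[Num.max/0]_(i < m) `|b i 0|).

(* Main.v *)
Require Import Defs.
From mathcomp Require Import all_boot all_order all_algebra.
From mathcomp Require Import all_classical all_reals all_analysis.
From mathcomp Require Import complex spectral sesquilinear.
From mathcomp Require Import ring lra.
Import Order.TTheory GRing.Theory Num.Theory.
Local Open Scope ring_scope.
Set Implicit Arguments. Unset Strict Implicit. Unset Printing Implicit Defensive.
Lemma char_poly_similar (F : fieldType) n (P B : 'M[F]_n) : P \in unitmx ->
  char_poly (invmx P *m B *m P) = char_poly B.
Proof.
move=> Pu.
rewrite /char_poly /char_poly_mx.
set Q := map_mx polyC P.
have Qu : Q \in unitmx by rewrite map_unitmx.
have -> : 'X%:M - map_mx polyC (invmx P *m B *m P) = invmx Q *m ('X%:M - map_mx polyC B) *m Q.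
  rewrite !map_mxM map_invmx mulmxBr mulmxBl; congr (_ - _).
  by rewrite mul_mx_scalar -scalemxAl mulVmx // scalemx1.
by rewrite !det_mulmx det_inv mulrC mulrA divrr ?mul1r // -unitmxE.
Qed.

Section Basics.
Variable R : realType.

Definition sqv {k} (v : 'cV[R]_k) : R := (v^T *m v) 0 0.

Lemma sqvE k (v : 'cV[R]_k) : sqv v = \sum_i v i 0 ^+ 2.
Proof. by rewrite /sqv mxE; apply: eq_bigr => i _; rewrite mxE expr2. Qed.

Lemma sqv_ge0 k (v : 'cV[R]_k) : 0 <= sqv v.
Proof. by rewrite sqvE; apply: sumr_ge0 => i _; rewrite sqr_ge0. Qed.

Lemma sqv_eq0 k (v : 'cV[R]_k) : sqv v = 0 -> v = 0.
Proof.
rewrite sqvE => /eqP; rewrite psumr_eq0; last by move=> i _; rewrite sqr_ge0.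
move=> /allP H; apply/matrixP => i j; rewrite ord1 mxE.
by have := H i (mem_index_enum _); rewrite sqrf_eq0 => /eqP.
Qed.

Lemma sqv_gt0 k (v : 'cV[R]_k) : v != 0 -> 0 < sqv v.
Proof.
move=> v0; rewrite lt_def sqv_ge0 andbT; apply/eqP => /sqv_eq0 H.
by rewrite H eqxx in v0.
Qed.

Lemma norm2E k (v : 'cV[R]_k) : norm2 v = Num.sqrt (sqv v).
Proof. by rewrite /norm2 sqvE. Qed.

Lemma norm2_sq k (v : 'cV[R]_k) : norm2 v ^+ 2 = sqv v.
Proof. by rewrite norm2E sqr_sqrtr // sqv_ge0. Qed.

Definition dotv {k} (u v : 'cV[R]_k) : R := (u^T *m v) 0 0.

Lemma dotvC k (u v : 'cV[R]_k) : dotv u v = dotv v u.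
Proof.
rewrite /dotv; have -> : v^T *m u = (u^T *m v)^T by rewrite trmx_mul trmxK.
by rewrite [RHS]mxE.
Qed.

Lemma dotvE k (u v : 'cV[R]_k) : dotv u v = \sum_i u i 0 * v i 0.
Proof. by rewrite /dotv mxE; apply: eq_bigr => i _; rewrite mxE. Qed.

Lemma sqvD k (u v : 'cV[R]_k) : sqv (u + v) = sqv u + 2 * dotv u v + sqv v.
Proof.
rewrite !sqvE dotvE mulr_sumr -!big_split /=; apply: eq_bigr => i _.
by rewrite mxE; ring.
Qed.

Lemma sqvZ k t (v : 'cV[R]_k) : sqv (t *: v) = t ^+ 2 * sqv v.
Proof. by rewrite /sqv [(t *: v)^T]linearZ /= -scalemxAl -scalemxAr !mxE mulrA expr2. Qed.

Lemma dotvZr k t (u v : 'cV[R]_k) : dotv u (t *: v) = t * dotv u v.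
Proof. by rewrite /dotv -scalemxAr mxE. Qed.

Lemma normal_eq m n (A : 'M[R]_(m, n)) b x :
  is_LS_solution A b x -> A^T *m (A *m x - b) = 0.
Proof.
move=> LS; set r := A *m x - b; set z := A^T *m r.
set w := A *m z.
have cE : dotv r w = sqv z.
  by rewrite /dotv /sqv /w /z trmx_mul trmxK !mulmxA.
have H : forall t : R, 0 <= 2 * t * sqv z + t ^+ 2 * sqv w.
  move=> t; have := LS (x + t *: z); rewrite !norm2_sq.
  have -> : A *m (x + t *: z) - b = r + t *: w.
    by rewrite mulmxDr -scalemxAr addrAC.
  rewrite [sqv (r + _)]sqvD sqvZ dotvZr cE -subr_ge0.
  by rewrite -/r; nra.
apply: sqv_eq0; apply/eqP; rewrite eq_le sqv_ge0 andbT.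
set c := sqv z; set q := sqv w.
have q0 : 0 <= q by apply: sqv_ge0.
have c0 : 0 <= c by apply: sqv_ge0.
have q1 : 0 < q + 1 by rewrite ltr_wpDl.
have E : 2 * (- c / (q + 1)) * c + (- c / (q + 1)) ^+ 2 * q
     = - ((c ^+ 2 * (q + 2)) / (q + 1) ^+ 2).
  by field; rewrite gt_eqF.
have := H (- c / (q + 1)); rewrite E oppr_ge0 => h.
have h2 : c ^+ 2 * (q + 2) <= 0.
  have hi : 0 < ((q + 1) ^+ 2)^-1 by rewrite invr_gt0 exprn_gt0.
  by move: h; rewrite pmulr_lle0.
have h3 : c ^+ 2 * (q + 2) = 0.
  by apply/eqP; rewrite eq_le h2 mulr_ge0 // ?sqr_ge0 // addr_ge0.
move: h3 => /eqP; rewrite mulf_eq0 sqrf_eq0 => /orP [/eqP -> //|].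
by rewrite gt_eqF // ltr_wpDl.
Qed.

Lemma eig_pos m n (A : 'M[R]_(m, n)) a :
  \rank A = n -> eigenvalue (A^T *m A) a -> 0 < a.
Proof.
move=> rk /eigenvalueP [v vM v0].
have rf : row_free A^T by rewrite /row_free mxrank_tr rk.
set u := A *m v^T.
have u0 : u != 0.
  apply: contra v0 => /eqP u0; rewrite -(mulmx_free_eq0 _ rf).
  by rewrite -(trmxK (v *m _)) trmx_mul trmxK -/u u0 linear0.
have vt0 : v^T != 0 by apply: contra v0 => /eqP h; rewrite -(trmxK v) h linear0.
have E : sqv u = a * sqv v^T.
  rewrite /sqv /u trmx_mul trmxK !mulmxA -(mulmxA v) vM -scalemxAl mxE.
  by [].
have := sqv_gt0 u0; rewrite E => h.
by rewrite -(pmulr_lgt0 _ (sqv_gt0 vt0)).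
Qed.

Lemma sym_char_split n (M : 'M[R]_n) : M^T = M ->
  exists e : 'I_n -> R, char_poly M = \prod_(i < n) ('X - (e i)%:P).
Proof.
move=> Msym.
pose f := real_complex R.
pose Mc : 'M[R[i]]_n := map_mx f M.
have Mcsym : Mc \is symmetricmx.
  apply/is_hermitianmxP; rewrite expr0 scale1r.
  apply/matrixP => i j; rewrite !mxE.
  by rewrite /= -[in RHS]Msym mxE.
have Mcreal : Mc \is a realmx.
  by apply/mxOverP => k l; rewrite mxE; apply/complex_realP; exists (M k l).
have Mch : Mc \is hermsymmx by apply: realsym_hermsym.
have /orthomx_spectralP Mceq := hermitian_normalmx Mch.
have dreal := hermitian_spectral_diag_real Mch.
set d := spectral_diag Mc in Mceq dreal.
exists (fun i => @complex.Re R (d 0 i)).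
apply: (@map_poly_inj _ _ f).
rewrite map_char_poly -/Mc Mceq char_poly_similar ?spectral_unit //.
rewrite char_poly_trig ?diag_mx_is_trig // rmorph_prod; apply: eq_bigr => i _.
rewrite rmorphB /= map_polyX map_polyC /= mxE eqxx mulr1n.
by rewrite RRe_real // (mxOverP dreal).
Qed.

Lemma gram_spec m n (A : 'M[R]_(m, n)) : \rank A = n ->
  exists e : 'I_n -> R,
  [/\ forall i, 0 < e i,
      forall a, eigenvalue (A^T *m A) a -> exists i, a = e i,
      forall i, eigenvalue (A^T *m A) (e i),
      \det (A^T *m A) = \prod_i e i &
      \tr (A^T *m A) = \sum_i e i].
Proof.
move=> rk; set M := A^T *m A.
have Msym : M^T = M by rewrite /M trmx_mul trmxK.
have [e Ech] := sym_char_split Msym.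
set ps := [seq e i | i <- enum 'I_n].
have Eps : char_poly M = \prod_(a <- ps) ('X - a%:P) by rewrite big_map big_enum.
have eigE a : eigenvalue M a = (a \in ps) by rewrite eigenvalue_root_char Eps root_prod_XsubC.
have eigi i : eigenvalue M (e i) by rewrite eigE; apply: map_f; rewrite mem_enum.
have sps : size ps = n by rewrite size_map size_enum_ord.
exists e; split => //.
- by move=> i; apply: (eig_pos rk (eigi i)).
- by move=> a; rewrite eigE => /mapP [i _ ->]; exists i.
- have := char_poly_det M; rewrite Eps coef0_prod_XsubC sps => /mulfI.
  rewrite signr_eq0 => /(_ isT) <-.
  by rewrite big_map big_enum.
- have [n0|npos] := posnP n.
    by clear -n0; move: M e; rewrite n0 => M e; rewrite /mxtrace !big_ord0.
  have := coefPn_prod_XsubC (ps := ps); rewrite sps => /(_ _).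
  rewrite -lt0n npos => /(_ isT).
  rewrite -Eps char_poly_trace // => /eqP; rewrite eqr_opp => /eqP ->.
  by rewrite big_map big_enum.
Qed.

Lemma ex_minmax n (e : 'I_n -> R) : (0 < n)%N ->
  exists imax imin, (forall i, e i <= e imax) /\ (forall i, e imin <= e i).
Proof.
move=> npos; pose i0 := Ordinal npos.
exists [arg max_(i > i0) e i]%O, [arg min_(i < i0) e i]%O; split.
  by case: (@arg_maxP _ _ _ i0 xpredT e isT) => j _ H i; apply: H.
by case: (@arg_minP _ _ _ i0 xpredT e isT) => j _ H i; apply: H.
Qed.

Lemma sv_bounds m n (A : 'M[R]_(m, n)) (e : 'I_n -> R) imax imin :
  (forall i, 0 < e i) ->
  (forall a, eigenvalue (A^T *m A) a -> exists i, a = e i) ->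
  (forall i, eigenvalue (A^T *m A) (e i)) ->
  (forall i, e i <= e imax) -> (forall i, e imin <= e i) ->
  0 <= kappa A /\ kappa A <= Num.sqrt (e imax / e imin).
Proof.
move=> epos eig1 eig2 hmax hmin.
set S := singular_values A.
have Smax : S (Num.sqrt (e imax)) by exists (e imax) => //; apply: eig2.
have ub : ubound S (Num.sqrt (e imax)).
  move=> y [a /eig1 [i ->] <-]; by rewrite ler_sqrt ?hmax // ltW.
have lb : lbound S (Num.sqrt (e imin)).
  move=> y [a /eig1 [i ->] <-]; by rewrite ler_sqrt ?hmin // ltW.
have neS : (S !=set0)%classic by exists (Num.sqrt (e imax)).
have s1 : sigma_max A <= Num.sqrt (e imax) by apply: ge_sup.
have s2 : Num.sqrt (e imax) <= sigma_max A.
  by apply: sup_upper_bound => //; split => //; exists (Num.sqrt (e imax)).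
have s3 : Num.sqrt (e imin) <= sigma_min A by apply: lb_le_inf.
have p3 : 0 < Num.sqrt (e imin) by rewrite sqrtr_gt0.
have p4 : 0 < sigma_min A by apply: lt_le_trans s3.
have p2 : 0 <= sigma_max A by apply: le_trans s2; apply: sqrtr_ge0.
split; first by rewrite /kappa divr_ge0 // ltW.
rewrite /kappa sqrtrM; last exact: ltW.
rewrite sqrtrV; last exact: ltW.
have h1 : sigma_max A / sigma_min A <= Num.sqrt (e imax) / sigma_min A.
  by rewrite ler_pM2r ?invr_gt0.
apply: (le_trans h1).
by rewrite ler_pM2l ?lef_pV2 ?sqrtr_gt0 // ?posrE.
Qed.

Lemma kls_bound m n (A : 'M[R]_(m, n)) b x (K : R) :
  sqv b = sqv (A *m x) + sqv (A *m x - b) -> 0 < sqv (A *m x) ->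
  0 <= kappa A -> kappa A <= Num.sqrt K -> 1 <= K ->
  kappa_LS A b x <= 3 * K * (norm2 b / norm2 (A *m x)).
Proof.
move=> Eb pp k0 kK K1.
set p := A *m x in Eb pp *; set r := A *m x - b in Eb *.
have sb : 0 < sqv b by rewrite Eb ltr_pwDl // sqv_ge0.
have nbp : 0 < norm2 b by rewrite norm2E sqrtr_gt0.
have npp : 0 < norm2 p by rewrite norm2E sqrtr_gt0.
have nr0 : 0 <= norm2 r by rewrite norm2E sqrtr_ge0.
have nrb : norm2 r <= norm2 b.
  rewrite !norm2E ler_sqrt ?sqv_ge0 //.
  by rewrite Eb; have := sqv_ge0 p; lra.
set s := norm2 r / norm2 b.
have s0 : 0 <= s by rewrite divr_ge0 // ltW.
have s1 : s <= 1 by rewrite ler_pdivrMr // mul1r.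
have sI : -1 <= s <= 1 by rewrite s1 andbT (le_trans _ s0) // lerN10.
have cosE : cos (LS_theta A b x) = norm2 p / norm2 b.
  rewrite /LS_theta -/r -/s cos_asin //.
  have -> : 1 - s ^+ 2 = sqv p / sqv b.
    rewrite /s expr_div_n !norm2_sq; apply: (@mulIf _ (sqv b)); first by rewrite gt_eqF.
    by rewrite mulrBl mul1r !mulfVK ?gt_eqF // Eb addrK.
  by rewrite sqrtrM ?sqv_ge0 // sqrtrV ?sqv_ge0 // -!norm2E.
have sinE : sin (LS_theta A b x) = s.
  by rewrite /LS_theta -/r -/s asinK // in_itv /=.
have tanE : tan (LS_theta A b x) = norm2 r / norm2 p.
  rewrite /tan sinE cosE /s invf_div mulrA mulrVK //; last by rewrite unitfE gt_eqF.
have kK2 : kappa A ^+ 2 <= K.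
  rewrite -(sqr_sqrtr (le_trans ler01 K1)) !expr2.
  by apply: ler_pM.
have sK : Num.sqrt K <= K.
  have s1K : 1 <= Num.sqrt K by rewrite -{1}sqrtr1 ler_sqrt // (le_trans ler01 K1).
  rewrite -[X in _ <= X](sqr_sqrtr (le_trans ler01 K1)) expr2.
  by rewrite ler_peMr // (le_trans ler01 s1K).
rewrite /kappa_LS /= cosE tanE invf_div.
set q := norm2 b / norm2 p.
have q0 : 0 <= q by rewrite divr_ge0 // ltW.
have h1 : norm2 r / norm2 p <= q by rewrite ler_pM2r ?invr_gt0.
have h2 : kappa A <= K := le_trans kK sK.
have h3 : norm2 r / norm2 p * kappa A ^+ 2 <= q * K.
  by apply: ler_pM => //; [rewrite divr_ge0 // ltW | rewrite exprn_ge0].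
have h4 : kappa A * q <= K * q by apply: ler_wpM2r.
rewrite -mulrA; lra.
Qed.

Lemma amgm_bound n (e : 'I_n -> R) imax imin : (0 < n)%N ->
  (forall i, 0 < e i) -> (forall i, e i <= e imax) -> (forall i, e imin <= e i) ->
  e imax / e imin * \prod_i e i <=
    ((if n == 1%N then 1 else 2) * (\sum_i e i) / n%:R) ^+ n.
Proof.
move=> npos epos hmax hmin.
pose g i := if i == imin then e imax else e i.
have g0 i : 0 <= g i by rewrite /g; case: ifP => _; apply: ltW.
have Ep : e imax / e imin * \prod_i e i = \prod_i g i.
  rewrite (bigD1 imin) //= [in RHS](bigD1 imin) //= {1}/g eqxx.
  rewrite mulrA mulfVK ?gt_eqF //; congr (_ * _).
  by apply: eq_bigr => i /negbTE; rewrite /g => ->.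
have Es : \sum_i g i = \sum_i e i - e imin + e imax.
  rewrite (bigD1 imin) //= [in RHS](bigD1 imin) //= {1}/g eqxx.
  have -> : \sum_(i < n | i != imin) g i = \sum_(i < n | i != imin) e i.
    by apply: eq_bigr => i /negbTE; rewrite /g => ->.
  ring.
have := leif_AGM (A := predT) (E := g) (fun i _ => g0 i).
case=> H _; rewrite card_ord in H.
rewrite Ep; apply: (le_trans H).
have sg0 : 0 <= \sum_(i in predT) g i by apply: sumr_ge0 => i _.
have T0 : 0 <= \sum_i e i by apply: sumr_ge0 => i _; apply/ltW/epos.
have emT : e imax <= \sum_i e i.
  rewrite (bigD1 imax) //= lerDl; apply: sumr_ge0 => i _; apply/ltW/epos.
apply: (@lerXn2r _ n); rewrite ?nnegrE ?divr_ge0 ?mulr_ge0 //; first by case: ifP.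
rewrite ler_pM2r ?invr_gt0 ?ltr0n //.
have -> : \sum_(i in predT) g i = \sum_i g i by [].
rewrite Es; case: eqP => [n1|_].
  have -> : imax = imin.
    have h1 : (imax < 1)%N by rewrite -[X in (_ < X)%N]n1.
    have h2 : (imin < 1)%N by rewrite -[X in (_ < X)%N]n1.
    by apply: val_inj; move: h1 h2; rewrite !ltnS !leqn0 => /eqP h1 /eqP h2; rewrite /= h1 h2.
  by rewrite mul1r subrK.
have := ltW (epos imin); lra.
Qed.

Lemma nat_ineq n : (2 <= n)%N -> (4 ^ n <= n ^ n * n ^ 2)%N.
Proof.
move=> n2; case: n n2 => [|[|[|[|n]]]] // _.
apply: (leq_trans (_ : _ <= n.+4 ^ n.+4)%N).
  by rewrite leq_exp2r.
by rewrite leq_pmulr // expn_gt0.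
Qed.

Lemma cn_bound n : (0 < n)%N ->
  ((if n == 1%N then 1 else 2) : R) ^+ n <= Num.sqrt (n%:R) ^+ n * n%:R.
Proof.
move=> npos; case: eqP => [->|n1]; first by rewrite !expr1 sqrtr1 mul1r.
have n2 : (2 <= n)%N by case: n npos n1 => [|[|]].
rewrite -(@ler_pXn2r _ 2) // ?nnegrE ?mulr_ge0 ?exprn_ge0 ?sqrtr_ge0 //.
rewrite exprMn -!exprM [(n * 2)%N]mulnC !exprM sqr_sqrtr ?ler0n //.
have -> : (2 : R) ^+ 2 = 4%:R by rewrite expr2 -natrM.
by rewrite -!natrX -natrM ler_nat nat_ineq.
Qed.

Lemma final_num n m (H : R) : (0 < n)%N -> (n <= m)%N -> 0 <= H ->
  3 * (((if n == 1%N then 1 else 2) * (n%:R * m%:R * H ^+ 2) / n%:R) ^+ n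
       * (Num.sqrt m%:R * H))
  <= 3 * powR (n%:R : R) (n%:R / 2 + 1) * powR (m%:R : R) (n%:R + 2^-1)
       * H ^+ (2 * n + 1).
Proof.
move=> npos nm H0.
have mpos : (0 < m)%N by apply: leq_trans nm.
have nR : (n%:R : R) != 0 by rewrite pnatr_eq0 -lt0n.
have mR : (m%:R : R) != 0 by rewrite pnatr_eq0 -lt0n.
have E1 : powR (n%:R : R) (n%:R / 2 + 1) = Num.sqrt (n%:R) ^+ n * n%:R.
  rewrite powRD; last by rewrite nR implybT.
  rewrite powRr1 ?ler0n //.
  by rewrite [n%:R / 2]mulrC powRrM powR12_sqrt ?ler0n // powR_mulrn ?sqrtr_ge0.
have E2 : powR (m%:R : R) (n%:R + 2^-1) = m%:R ^+ n * Num.sqrt m%:R.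
  rewrite powRD; last by rewrite mR implybT.
  by rewrite powR_mulrn ?ler0n // powR12_sqrt ?ler0n.
rewrite E1 E2.
set c : R := (if n == 1%N then 1 else 2).
have c0 : 0 <= c by rewrite /c; case: ifP.
have -> : c * (n%:R * m%:R * H ^+ 2) / n%:R = c * (m%:R * H ^+ 2).
  by field.
rewrite exprMn exprMn -exprM exprD expr1 mulnC.
have hc := cn_bound npos; rewrite -/c in hc.
set a := c ^+ n in hc *; set bb := Num.sqrt n%:R ^+ n * n%:R in hc *.
set mm := m%:R ^+ n; set hh := H ^+ (n * 2); set sm := Num.sqrt (m%:R : R).
have a0 : 0 <= a by rewrite exprn_ge0.
have mm0 : 0 <= mm by rewrite exprn_ge0 ?ler0n.
have hh0 : 0 <= hh by rewrite exprn_ge0.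
have sm0 : 0 <= sm by rewrite sqrtr_ge0.
have X : 0 <= mm * hh * (sm * H) by rewrite !mulr_ge0.
have : a * (mm * hh * (sm * H)) <= bb * (mm * hh * (sm * H)) by rewrite ler_wpM2r.
move=> Y; rewrite -!mulrA; apply: ler_wpM2l => //.
have -> : a * (mm * (hh * (sm * H))) = a * (mm * hh * (sm * H)) by ring.
have -> : Num.sqrt n%:R ^+ n * (n%:R * (mm * (sm * (hh * H)))) = bb * (mm * hh * (sm * H)).
  by rewrite /bb; ring.
exact: Y.
Qed.

Lemma sqvN k (v : 'cV[R]_k) : sqv (- v) = sqv v.
Proof. by rewrite !sqvE; apply: eq_bigr => i _; rewrite mxE sqrrN. Qed.

Lemma dotvNr k (u v : 'cV[R]_k) : dotv u (- v) = - dotv u v.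
Proof. by rewrite /dotv mulmxN mxE. Qed.

Lemma dotvZl k t (u v : 'cV[R]_k) : dotv (t *: u) v = t * dotv u v.
Proof. by rewrite dotvC dotvZr dotvC. Qed.

End Basics.

Lemma le_bigmax_int k (F : 'I_k -> int) i : F i <= \big[Num.max/0]_(j < k) F j.
Proof.
have : forall r, i \in r -> F i <= \big[Num.max/0]_(j <- r) F j.
  elim => // a r IH; rewrite in_cons big_cons /= le_max.
  by case/orP => [/eqP ->|/IH ->]; rewrite ?lexx ?orbT.
by apply; rewrite mem_index_enum.
Qed.

Lemma height_A m n (A : 'M[int]_(m, n)) (b : 'cV[int]_m) i j : `|A i j| <= height A b.
Proof.
rewrite /height le_max; apply/orP; left.
apply: le_trans (le_bigmax_int _ i).
exact: (le_bigmax_int (fun j => `|A i j|) j).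
Qed.

Lemma height_b m n (A : 'M[int]_(m, n)) (b : 'cV[int]_m) i : `|b i 0| <= height A b.
Proof.
rewrite /height le_max; apply/orP; right.
exact: (le_bigmax_int (fun i => `|b i 0|) i).
Qed.

Lemma sq_int_le (R : realType) (z h : int) : `|z| <= h -> (z%:~R : R) ^+ 2 <= (h%:~R) ^+ 2.
Proof.
move=> zh; have h0 : 0 <= h by apply: le_trans zh.
rewrite -real_normK ?realz //.
apply: (@lerXn2r _ 2); rewrite ?nnegrE ?normr_ge0 ?ler0z //.
by rewrite -intr_norm ler_int.
Qed.

Theorem theorem2 (R : realType) (m n : nat) (A : 'M[int]_(m, n)) (b : 'cV[int]_m)
  (x : 'cV[R]_n) :
  (n <= m)%N ->
  \rank (map_mx (fun z : int => z%:~R : R) A) = n ->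
  (exists y : 'cV[R]_n,
     ((map_mx (fun z : int => z%:~R : R) b)^T
        *m (map_mx (fun z : int => z%:~R : R) A *m y)) 0 0 != 0) ->
  is_LS_solution (map_mx (fun z : int => z%:~R : R) A)
                 (map_mx (fun z : int => z%:~R : R) b) x ->
  kappa_LS (map_mx (fun z : int => z%:~R : R) A)
           (map_mx (fun z : int => z%:~R : R) b) x
  <= 3 * powR (n%:R : R) (n%:R / 2 + 1) * powR (m%:R : R) (n%:R + 2^-1)
       * ((height A b)%:~R : R) ^+ (2 * n + 1).
Proof.
move=> nm rk [y hy] LS.
set AR := map_mx _ A in rk hy LS *.
set bR := map_mx _ b in hy LS *.
have npos : (0 < n)%N.
  case: (posnP n) => [n0|//].
  have : AR *m y = 0.
    apply/matrixP => i j; rewrite !mxE; apply: big1 => k _.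
    by have := ltn_ord k; rewrite [X in (_ < X)%N]n0.
  by move=> h; rewrite h mulmx0 mxE eqxx in hy.
have [e [epos eig1 eig2 detE trE]] := gram_spec rk.
have [imax [imin [hmax hmin]]] := ex_minmax e npos.
have [k0 kK] := sv_bounds epos eig1 eig2 hmax hmin.
have NE := normal_eq LS.
set p := AR *m x in NE *; set r := p - bR in NE.
have pr0 : dotv p r = 0.
  by rewrite /dotv /p trmx_mul -mulmxA NE mulmx0 mxE.
have Eb : sqv bR = sqv p + sqv (AR *m x - bR).
  have -> : bR = p + (- r) by rewrite /r opprB addrCA subrr addr0.
  by rewrite sqvD dotvNr pr0 oppr0 mulr0 addr0 sqvN /r opprB addrCA subrr addr0.
have bRE : bR = p - r by rewrite /r opprB addrCA subrr addr0.
have ATr : AR^T *m bR = AR^T *m p.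
  by rewrite {1}bRE mulmxBr NE subr0.
have p0 : p != 0.
  apply: contra hy => /eqP p0.
  rewrite mulmxA.
  have -> : bR^T *m AR = (AR^T *m bR)^T by rewrite trmx_mul trmxK.
  by rewrite ATr p0 mulmx0 linear0 mul0mx mxE eqxx.
set M := AR^T *m AR in detE trE.
have Mx : M *m x = AR^T *m bR by rewrite ATr /p mulmxA.
have adjE : \adj M *m (AR^T *m bR) = \det M *: x.
  by rewrite -Mx mulmxA mul_adj_mx mul_scalar_mx.
have sqpE : sqv p = dotv x (AR^T *m bR) by rewrite /sqv /dotv -Mx /p trmx_mul !mulmxA.
have keyE : \det M * sqv p = dotv (\adj M *m (AR^T *m bR)) (AR^T *m bR).
  by rewrite adjE dotvZl sqpE.
have MiE : M = map_mx (fun z : int => z%:~R : R) (A^T *m A) by rewrite map_mxM -map_trmx.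
have ciE : AR^T *m bR = map_mx (fun z : int => z%:~R : R) (A^T *m b) by rewrite map_mxM -map_trmx.
rewrite ciE MiE -map_mx_adj -map_mxM /dotv map_trmx -map_mxM mxE det_map_mx in keyE.
have Dpos : 0 < \det M by rewrite detE prodr_gt0.
have D1 : 1 <= \det M.
  move: Dpos; rewrite MiE det_map_mx ltr0z => h.
  by rewrite ler1z.
have pp : 0 < sqv p by apply: sqv_gt0.
have DzE : \det M = (\det (A^T *m A))%:~R by rewrite MiE det_map_mx.
have k1 : 1 <= \det M * sqv p.
  have h : 0 < \det M * sqv p by rewrite mulr_gt0.
  by move: h; rewrite DzE keyE ltr0z => h; rewrite ler1z.
set H : R := (height A b)%:~R.
have H0 : 0 <= H.
  have i0 : 'I_m := Ordinal (leq_trans npos nm).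
  by rewrite ler0z; apply: le_trans (height_b A b i0).
have trB : \tr M <= n%:R * m%:R * H ^+ 2.
  rewrite /mxtrace (eq_bigr (fun i => \sum_k (AR k i) ^+ 2)); last first.
    by move=> i _; rewrite /M mxE; apply: eq_bigr => k _; rewrite mxE expr2.
  apply: le_trans (_ : _ <= \sum_(i < n) \sum_(k < m) H ^+ 2) _.
    apply: ler_sum => i _; apply: ler_sum => k _; rewrite /AR mxE.
    exact: sq_int_le (height_A A b k i).
  by rewrite !sumr_const !card_ord -[(_ *+ m) *+ n]mulr_natl -[H ^+ 2 *+ m]mulr_natl mulrA.
have nbB : norm2 bR <= Num.sqrt m%:R * H.
  rewrite norm2E sqvE -(ger0_norm H0) -sqrtr_sqr -sqrtrM ?ler0n //.
  rewrite ler_sqrt ?mulr_ge0 ?ler0n ?sqr_ge0 //.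
  apply: le_trans (_ : _ <= \sum_(i < m) H ^+ 2) _.
    apply: ler_sum => i _; rewrite /bR mxE.
    exact: sq_int_le (height_b A b i).
  by rewrite sumr_const card_ord -[H ^+ 2 *+ m]mulr_natl.
set K := e imax / e imin.
have K1 : 1 <= K by rewrite /K ler_pdivlMr // mul1r.
have KLS := kls_bound Eb pp k0 kK K1.
apply: le_trans KLS _.
have npp : 0 < norm2 p by rewrite norm2E sqrtr_gt0.
have nb0 : 0 <= norm2 bR by rewrite norm2E sqrtr_ge0.
have inv : (norm2 p)^-1 <= Num.sqrt (\det M).
  rewrite -[_^-1]mulr1 ler_pdivrMl // norm2E -sqrtrM ?sqv_ge0 //.
  by rewrite -{1}sqrtr1 ler_sqrt ?mulr_ge0 ?sqv_ge0 ?(ltW Dpos) // mulrC.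
have sD : Num.sqrt (\det M) <= \det M.
  have s1K : 1 <= Num.sqrt (\det M) by rewrite -{1}sqrtr1 ler_sqrt // ltW.
  rewrite -[X in _ <= X](sqr_sqrtr (ltW Dpos)) expr2.
  by rewrite ler_peMr // (le_trans ler01 s1K).
have amgm := amgm_bound npos epos hmax hmin.
rewrite -detE -trE -/K in amgm.
set c : R := (if n == 1%N then 1 else 2) in amgm.
have c0 : 0 <= c by rewrite /c; case: ifP.
have T0 : 0 <= \tr M by rewrite trE sumr_ge0 // => i _; apply/ltW/epos.
have amgm2 : K * \det M <= (c * (n%:R * m%:R * H ^+ 2) / n%:R) ^+ n.
  apply: (le_trans amgm); apply: (@lerXn2r _ n); rewrite ?nnegrE ?divr_ge0 ?mulr_ge0 ?ler0n ?sqr_ge0 //.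
  by rewrite ler_pM2r ?invr_gt0 ?ltr0n // ler_wpM2l.
have K0 : 0 <= K by apply: le_trans K1.
apply: le_trans (final_num npos nm H0).
rewrite -/p -mulrA ler_wpM2l //.
apply: (@le_trans _ _ (K * (norm2 bR * \det M))).
  rewrite ler_wpM2l // ler_wpM2l //; apply: le_trans inv sD.
rewrite mulrCA mulrC; apply: ler_pM => //; by rewrite mulr_ge0 // ltW.
Qed.
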